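(* Every bounded complex spectral family $E$ in a complete lattice $\mathbb{L}$ is decomposable, i.e. there are spectral families $E^1,E^2$ in $\mathbb{L}$ such that $E_{\lambda,\mu}=E^1_\lambda\wedge E^2_\mu$ for all $\lambda,\mu\in\mathbb{R}$.
   Context: $\mathbb{L}$ has least element $0$ and greatest element $1$. A (real) spectral family is a map $F:\mathbb{R}\to\mathbb{L}$ with $F_\lambda\le F_\mu$ for $\lambda\le\mu$, $F_\lambda=\bigwedge_{\mu>\lambda}F_\mu$, $\bigwedge_\lambda F_\lambda=0$, $\bigvee_\lambda F_\lambda=1$. A complex spectral family is a map $E:\mathbb{R}^2\to\mathbb{L}$ with (i) $E_{\lambda_1,\lambda_2}\wedge E_{\mu_1,\mu_2}=E_{\min\{\lambda_1,\mu_1\},\min\{\lambda_2,\mu_2\}}$; (ii) $\bigwedge_{\lambda_1<\mu_1,\lambda_2<\mu_2}E_{\mu_1,\mu_2}=E_{\lambda_1,\lambda_2}$; (iii) $\bigwedge_\lambda E_{\lambda,\lambda_2}=0=\bigwedge_\lambda E_{\lambda_1,\lambda}$ for all $\lambda_1,\lambda_2$, and $\bigvee_{\lambda_1,\lambda_2}E_{\lambda_1,\lambda_2}=1$. It is bounded if there are $m,b\in\mathbb{R}$ with $E_{\lambda_1,\lambda_2}=0$ whenever $\lambda_1\le m$ or $\lambda_2\le m$, and $E_{\lambda_1,\lambda_2}=1$ whenever $\lambda_1,\lambda_2\ge b$. *)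

(* Defs.v *)
From HB Require Import structures.
From mathcomp Require Import all_boot all_order all_algebra.
From mathcomp Require Import reals.
Set Implicit Arguments. Unset Strict Implicit. Unset Printing Implicit Defensive.
Import Order.TTheory GRing.Theory Num.Theory.
Local Open Scope ring_scope.

Section Bounds.
Context {d : Order.disp_t} {T : porderType d}.

Definition is_lbound (S : T -> Prop) (x : T) := forall y, S y -> (x <= y)%O.
Definition is_ubound (S : T -> Prop) (x : T) := forall y, S y -> (y <= x)%O.
Definition is_inf (S : T -> Prop) (x : T) :=
  is_lbound S x /\ forall z, is_lbound S z -> (z <= x)%O.
Definition is_sup (S : T -> Prop) (x : T) :=
  is_ubound S x /\ forall z, is_ubound S z -> (x <= z)%O.

Definition complete_lattice :=
  forall S : T -> Prop, (exists x, is_inf S x) /\ (exists x, is_sup S x).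
End Bounds.

Section Spectral.
Context {d : Order.disp_t} (L : tbLatticeType d) (R : realType).

Definition spectral_family (F : R -> L) : Prop :=
  [/\ (forall l m : R, l <= m -> (F l <= F m)%O),
      (forall l : R, is_inf (fun x => exists m : R, l < m /\ x = F m) (F l)),
      is_inf (fun x => exists l : R, x = F l) (\bot%O) &
      is_sup (fun x => exists l : R, x = F l) (\top%O)].

Definition complex_spectral_family (E : R -> R -> L) : Prop :=
  [/\ (forall l1 l2 m1 m2 : R,
         (E l1 l2 `&` E m1 m2)%O = E (Num.min l1 m1) (Num.min l2 m2)),
      (forall l1 l2 : R,
         is_inf (fun x => exists m1 m2 : R, [/\ l1 < m1, l2 < m2 & x = E m1 m2])
                (E l1 l2)),
      (forall l2 : R, is_inf (fun x => exists l : R, x = E l l2) (\bot%O)),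
      (forall l1 : R, is_inf (fun x => exists l : R, x = E l1 l) (\bot%O)) &
      is_sup (fun x => exists l1 l2 : R, x = E l1 l2) (\top%O)].

Definition bounded_csf (E : R -> R -> L) : Prop :=
  exists m b : R,
    (forall l1 l2 : R, l1 <= m \/ l2 <= m -> E l1 l2 = \bot%O) /\
    (forall l1 l2 : R, b <= l1 -> b <= l2 -> E l1 l2 = \top%O).

Definition decomposable (E : R -> R -> L) : Prop :=
  exists E1 E2 : R -> L,
    [/\ spectral_family E1, spectral_family E2 &
        forall l m : R, E l m = (E1 l `&` E2 m)%O].
End Spectral.

(* Main.v *)
Require Import Defs.
From HB Require Import structures.
From mathcomp Require Import all_boot all_order all_algebra.
From mathcomp Require Import reals.
Import Order.TTheory GRing.Theory Num.Theory.
Local Open Scope ring_scope.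

Theorem proposition2p20 (d : Order.disp_t) (L : tbLatticeType d) (R : realType) :
  @complete_lattice d L ->
  forall E : R -> R -> L,
    complex_spectral_family E -> bounded_csf E -> decomposable E.
Proof.
move=> _ E [Hm Hrc _ _ _] [m [b [Hbot Htop]]].
have mono : forall l1 l2 m1 m2 : R, l1 <= m1 -> l2 <= m2 -> (E l1 l2 <= E m1 m2)%O.
  move=> l1 l2 m1 m2 h1 h2; apply/meet_idPl; rewrite Hm.
  by rewrite (min_l h1) (min_l h2).
have Ebb : E b b = \top%O by apply: Htop.
exists (fun l => E l b), (fun l => E b l); split.
- split.
  + by move=> l1 l2 h; apply: mono.
  + move=> l; split.
    * by move=> y [m1 [lm ->]]; apply: mono => //; apply: ltW.
    * move=> z hz; have [hlb hg] := Hrc l b; apply: hg => y [m1 [m2 [h1 h2 ->]]].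
      apply: (le_trans (hz _ (ex_intro _ m1 (conj h1 erefl)))).
      by apply: mono => //; apply: ltW.
  + split; first by move=> y _; apply: le0x.
    by move=> z hz; rewrite -(Hbot m b (or_introl (lexx m))); apply: hz; exists m.
  + split; first by move=> y _; apply: lex1.
    by move=> z hz; rewrite -Ebb; apply: hz; exists b.
- split.
  + by move=> l1 l2 h; apply: mono.
  + move=> l; split.
    * by move=> y [m1 [lm ->]]; apply: mono => //; apply: ltW.
    * move=> z hz; have [hlb hg] := Hrc b l; apply: hg => y [m1 [m2 [h1 h2 ->]]].
      apply: (le_trans (hz _ (ex_intro _ m2 (conj h2 erefl)))).
      by apply: mono => //; apply: ltW.
  + split; first by move=> y _; apply: le0x.
    by move=> z hz; rewrite -(Hbot b m (or_intror (lexx m))); apply: hz; exists m.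
  + split; first by move=> y _; apply: lex1.
    by move=> z hz; rewrite -Ebb; apply: hz; exists b.
- move=> l1 l2; rewrite Hm.
  have := Hm l1 l2 b b; rewrite Ebb meetx1 => ->.
  by rewrite [Num.min b l2]minC.
Qed.
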